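(* Let $V$ be a toroidal vertex algebra and let $I$ be an ideal of $V$. Define $$K(I)=\{v\in V\mid v_{m_0,\mathbf{m}}V\subset I\ \text{for all }(m_0,\mathbf{m})\in\mathbb{Z}\times\mathbb{Z}^r\},\qquad \mathcal{R}(I)=I\cap V^0,$$ and for an ideal $I^0$ of $V^0$ define $\mathcal{G}(I^0)=\mathrm{span}\{a_{m_0,\mathbf{m}}v\mid a\in I^0, v\in V,(m_0,\mathbf{m})\in\mathbb{Z}\times\mathbb{Z}^r\}$ (an ideal of $V$). Then $$K(\mathcal{G}(\mathcal{R}(I)))=K(I)\quad\text{and}\quad \mathcal{R}(I)=\mathcal{R}(K(I)).$$
   Context: Fix a positive integer $r$. Write $\mathbf{x}=(x_1,\dots,x_r)$, $\mathbf{x}^{\mathbf{m}}=x_1^{m_1}\cdots x_r^{m_r}$ (similarly for other variables), $\mathbf{z}\mathbf{y}=(z_1y_1,\dots,z_ry_r)$. For a vector space $W$ put $\mathcal{E}(W,r)=\mathrm{Hom}(W,W[[x_1^{\pm1},\dots,x_r^{\pm1}]]((x_0)))$. A toroidal vertex algebra is a vector space $V$ with a linear map $Y(\cdot;x_0,\mathbf{x}):V\to\mathcal{E}(V,r)$, $v\mapsto\sum_{(m_0,\mathbf{m})\in\mathbb{Z}\times\mathbb{Z}^r}v_{m_0,\mathbf{m}}x_0^{-m_0-1}\mathbf{x}^{-\mathbf{m}}$, and a vector $\mathbf{1}$ with $Y(\mathbf{1};x_0,\mathbf{x})v=v$, $Y(v;x_0,\mathbf{x})\mathbf{1}\in V[[x_0,x_1^{\pm1},\dots,x_r^{\pm1}]]$,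 and the Jacobi identity $$z_0^{-1}\delta\!\left(\tfrac{x_0-y_0}{z_0}\right)Y(u;x_0,\mathbf{z}\mathbf{y})Y(v;y_0,\mathbf{y})-z_0^{-1}\delta\!\left(\tfrac{y_0-x_0}{-z_0}\right)Y(v;y_0,\mathbf{y})Y(u;x_0,\mathbf{z}\mathbf{y})=y_0^{-1}\delta\!\left(\tfrac{x_0-z_0}{y_0}\right)Y(Y(u;z_0,\mathbf{z})v;y_0,\mathbf{y})$$ for all $u,v$, where $Y(u;x_0,\mathbf{z}\mathbf{y})=\sum u_{m_0,\mathbf{m}}x_0^{-m_0-1}\mathbf{z}^{-\mathbf{m}}\mathbf{y}^{-\mathbf{m}}$. An ideal of $V$ is a subspace $I$ with $u_{m_0,\mathbf{m}}v\in I$ whenever $u\in I$ or $v\in I$. $V^0=\mathrm{span}\{v_{m_0,\mathbf{m}}\mathbf{1}\}$ is a toroidal vertex subalgebra; $\mathcal{R}(I)$ is an ideal of $V^0$. *)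

(* Defs.v *)
From HB Require Import structures.
From mathcomp Require Import all_boot all_order all_algebra.
Set Implicit Arguments.
Unset Strict Implicit.
Unset Printing Implicit Defensive.
Import Order.TTheory GRing.Theory Num.Theory.
Local Open Scope ring_scope.

(* Generalized binomial coefficient binom(p, i) for p : int, i : nat:
   p (p-1) ... (p-i+1) / i!.  For p = -(n+1) < 0 this is (-1)^i C(i+n, i). *)
Definition binz (p : int) (i : nat) : int :=
  match p with
  | Posz n => ('C(n, i))%:Z
  | Negz n => (-1) ^+ i * ('C(i + n, i))%:Z
  end.

(* A toroidal vertex algebra over the field K with underlying vector space V.
   tva_mode v m0 m w  is  v_{m0,m} w, the coefficient of x0^{-m0-1} x^{-m}
   in Y(v; x0, x) w.  The Jacobi identity is stated through its coefficients
   (Borcherds identity form). *)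
Record toroidal_va (K : fieldType) (V : lmodType K) (r : nat) := ToroidalVA {
  tva_mode : V -> int -> 'rV[int]_r -> V -> V;
  tva_vac : V;
  tva_linl : forall (a : K) u v m0 m w,
      tva_mode (a *: u + v) m0 m w = a *: tva_mode u m0 m w + tva_mode v m0 m w;
  tva_linr : forall u m0 m (a : K) v w,
      tva_mode u m0 m (a *: v + w) = a *: tva_mode u m0 m v + tva_mode u m0 m w;
  (* Y(u; x0, x) w lies in V[[x^{+-1}]]((x0)) *)
  tva_trunc : forall v w, exists N : int,
      forall (m0 : int) m, N <= m0 -> tva_mode v m0 m w = 0;
  tva_vacuum : forall m0 m v,
      tva_mode tva_vac m0 m v = if (m0 == -1) && (m == 0) then v else 0;
  (* Y(v; x0, x) 1 lies in V[[x0, x^{+-1}]] *)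
  tva_creation : forall v (m0 : int) m, 0 <= m0 -> tva_mode v m0 m tva_vac = 0;
  (* Jacobi identity, coefficient of z0^{-s-1} x0^{-p-1} y0^{-q-1} z^{-m} y^{-k};
     all sums over i >= 0 are finite, cut at any N beyond which all terms vanish *)
  tva_jacobi : forall u v w (p q s : int) (m k : 'rV[int]_r) (N : nat),
      (forall i : nat, (N <= i)%N ->
         [/\ tva_mode u (s + i%:Z) m v = 0,
             tva_mode v (q + i%:Z) (k - m) w = 0
           & tva_mode u (p + i%:Z) m w = 0]) ->
      \sum_(0 <= i < N)
          tva_mode (tva_mode u (s + i%:Z) m v) (p + q - i%:Z) k w *~ binz p i
      = \sum_(0 <= i < N)
          (tva_mode u (p + s - i%:Z) m (tva_mode v (q + i%:Z) (k - m) w)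
           - tva_mode v (q + s - i%:Z) (k - m) (tva_mode u (p + i%:Z) m w)
               *~ ((-1) ^+ `|s|%N))
          *~ ((-1) ^+ i * binz s i)
}.

Section Defs.
Variables (K : fieldType) (V : lmodType K) (r : nat) (A : toroidal_va V r).

Local Notation md := (tva_mode A).

Inductive in_span (S : V -> Prop) : V -> Prop :=
  | span_base x : S x -> in_span S x
  | span_zero : in_span S 0
  | span_comb (a : K) x y : in_span S x -> in_span S y -> in_span S (a *: x + y).

Definition subspace (S : V -> Prop) : Prop :=
  S 0 /\ forall (a : K) x y, S x -> S y -> S (a *: x + y).

Definition tva_ideal (I : V -> Prop) : Prop :=
  subspace I /\ forall u v m0 m, (I u \/ I v) -> I (md u m0 m v).

Definition V0 : V -> Prop :=
  in_span (fun x => exists v m0 m, x = md v m0 m (tva_vac A)).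

Definition Kid (I : V -> Prop) : V -> Prop :=
  fun v => forall m0 m w, I (md v m0 m w).

Definition Rid (I : V -> Prop) : V -> Prop := fun v => I v /\ V0 v.

Definition Gid (I0 : V -> Prop) : V -> Prop :=
  in_span (fun x => exists a v m0 m, I0 a /\ x = md a m0 m v).

End Defs.

(* Main.v *)
Require Import Defs.
From mathcomp Require Import all_boot all_order all_algebra.
From mathcomp Require Import zify.
Set Implicit Arguments.
Unset Strict Implicit.
Unset Printing Implicit Defensive.
Import Order.TTheory GRing.Theory Num.Theory.
Local Open Scope ring_scope.

Section Aux.
Variables (K : fieldType) (V : lmodType K) (r : nat) (A : toroidal_va V r).
Local Notation md := (tva_mode A).
Local Notation vac := (tva_vac A).

Lemma md0r u m0 m : md u m0 m 0 = 0.
Proof.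
have := tva_linr A u m0 m (-1) 0 0.
by rewrite scaler0 add0r scaleN1r addNr.
Qed.

Lemma md0l m0 m w : md 0 m0 m w = 0.
Proof.
have := tva_linl A (-1) 0 0 m0 m w.
by rewrite scaler0 add0r scaleN1r addNr.
Qed.

Lemma sum_first (T : zmodType) N (F : nat -> T) : (0 < N)%N ->
  (forall i, (0 < i)%N -> F i = 0) -> \sum_(0 <= i < N) F i = F 0%N.
Proof.
move=> HN HF; rewrite big_ltn // big_nat_cond big1 ?addr0 //.
by move=> i /andP[/andP[Hi _] _]; apply: HF.
Qed.

Lemma binz0 p : binz p 0 = 1.
Proof. by case: p => n /=; rewrite ?bin0 ?expr0 ?mul1r. Qed.

Lemma key u p m w : md u p m w = md (md u (-1) m vac) p m w.
Proof.
have [N0 HN0] := (@tva_trunc _ _ _ A) u w.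
have HN : (0 < (`|N0 - p|%N).+1)%N by [].
have Hc : forall i : nat, ((`|N0 - p|%N).+1 <= i)%N ->
   [/\ md u (-1 + i%:Z) m vac = 0, md vac (0 + i%:Z) (m - m) w = 0
      & md u (p + i%:Z) m w = 0].
  move=> i Hi; split.
  + rewrite tva_creation //; lia.
  + rewrite tva_vacuum; have -> : (0 + i%:Z == -1) = false by apply/negbTE; lia.
    by [].
  + apply: HN0. lia.
have J := (@tva_jacobi _ _ _ A) u vac w p 0 (-1) m m _ Hc.
rewrite !sum_first // in J; last first.
- move=> i Hi; rewrite tva_creation ?md0l ?mul0rz //; lia.
- move=> i Hi; rewrite tva_vacuum.
  have -> : (0 + i%:Z == -1) = false by apply/negbTE; lia.
  rewrite /= md0r sub0r tva_vacuum.
  have -> : (0 - 1 - i%:Z == -1) = false by apply/negbTE; lia.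
  by rewrite /= mul0rz oppr0 mul0rz.
move: J.
have -> : -1 + 0%:Z = -1 :> int by [].
have -> : p + 0 - 0%:Z = p :> int by lia.
have -> : p + 0%:Z = p :> int by lia.
have -> : md vac (0 + 0%:Z) (m - m) w = 0 by rewrite tva_vacuum.
have -> : md vac (-1) (m - m) (md u p m w) = md u p m w.
  by rewrite tva_vacuum subrr !eqxx.
rewrite binz0 mulr1z md0r sub0r expr0 mul1r.
have -> : binz (-1) 0 = 1 by [].
by rewrite mulr1z expr1 mulrN1z opprK => <-.
Qed.

Lemma key2 u n k0 k :
  md (md u n k0 vac) (-1) k vac = if k == k0 then md u n k0 vac else 0.
Proof.
have [N0 HN0] := (@tva_trunc _ _ _ A) u vac.
have HN : (0 < (`|N0 - n|%N).+1)%N by [].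
have Hc : forall i : nat, ((`|N0 - n|%N).+1 <= i)%N ->
   [/\ md u (n + i%:Z) k0 vac = 0, md vac (-1 + i%:Z) (k - k0) vac = 0
      & md u (0 + i%:Z) k0 vac = 0].
  move=> i Hi; split.
  + apply: HN0; lia.
  + rewrite tva_vacuum; have -> : (-1 + i%:Z == -1) = false by apply/negbTE; lia.
    by [].
  + rewrite tva_creation //; lia.
have J := (@tva_jacobi _ _ _ A) u vac vac 0 (-1) n k0 k _ Hc.
rewrite !sum_first // in J; last first.
- move=> i Hi; rewrite (_ : binz 0 i = 0) ?mulr0z //; by case: i Hi.
- move=> i Hi.
  rewrite (@tva_creation _ _ _ A u); last by lia.
  rewrite md0r mul0rz subr0 tva_vacuum.
  have -> : (-1 + i%:Z == -1) = false by apply/negbTE; lia.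
  by rewrite /= md0r mul0rz.
move: J.
have -> : 0 - 1 - 0%:Z = -1 :> int by [].
have -> : 0 + n - 0%:Z = n :> int by lia.
have -> : n + 0%:Z = n :> int by lia.
rewrite [md u (_ + _) k0 vac](@tva_creation _ _ _ A u) //.
rewrite binz0 mulr1z md0r mul0rz subr0.
rewrite tva_vacuum eqxx /= expr0 mul1r binz0 mulr1z subr_eq0 => ->.
by case: eqP; rewrite ?md0r // => ->; rewrite subrr.
Qed.

Lemma sum_sub (f : 'rV[int]_r -> V) s t : uniq s -> uniq t -> {subset s <= t} ->
  (forall k, k \notin s -> f k = 0) -> \sum_(k <- t) f k = \sum_(k <- s) f k.
Proof.
move=> us ut sst Hf.
rewrite (bigID (fun k => k \in s)) /= [X in _ + X]big1 ?addr0; last first.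
  by move=> k /Hf.
rewrite -big_filter; apply: perm_big; apply: uniq_perm.
- exact: filter_uniq.
- exact: us.
- by move=> k; rewrite mem_filter; case: (boolP (k \in s)) => // /sst ->.
Qed.

Lemma decomp v : V0 A v -> exists s : seq 'rV[int]_r, [/\ uniq s,
  (forall k, k \notin s -> md v (-1) k vac = 0) &
  v = \sum_(k <- s) md v (-1) k vac].
Proof.
elim=> [x [u [n [k0 ->]]] | | a x y _ [sx [ux zx ex]] _ [sy [uy zy ey]]].
- exists [:: k0]; split => //.
  + by move=> k; rewrite inE key2 => /negbTE ->.
  + by rewrite big_seq1 key2 eqxx.
- by exists [::]; split => //; [move=> k _; apply: md0l | rewrite big_nil].
- exists (undup (sx ++ sy)); split.
  + exact: undup_uniq.
  + move=> k; rewrite mem_undup mem_cat negb_or => /andP[/zx hx /zy hy].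
    by rewrite tva_linl hx hy scaler0 addr0.
  + under eq_bigr do rewrite tva_linl.
    rewrite big_split /= -scaler_sumr.
    rewrite (@sum_sub (fun k => md x (-1) k vac) sx _ ux (undup_uniq _)) //;
      last by move=> k; rewrite mem_undup mem_cat => ->.
    rewrite (@sum_sub (fun k => md y (-1) k vac) sy _ uy (undup_uniq _)) //;
      last by move=> k; rewrite mem_undup mem_cat orbC => ->.
    by rewrite -ex -ey.
Qed.

End Aux.

Theorem proposition2p21 (K : fieldType) (V : lmodType K) (r : nat)
    (A : toroidal_va V r) (I : V -> Prop) :
  tva_ideal A I ->
  (forall v, Kid A (Gid A (Rid A I)) v <-> Kid A I v) /\
  (forall v, Rid A I v <-> Rid A (Kid A I) v).
Proof.
move=> [[I0 Icomb] Iid]; split=> v; split.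
- move=> H m0 m w; move: (H m0 m w); elim=> //.
  + by move=> x [a [w' [n [k [[Ia _] ->]]]]]; apply: Iid; left.
  + by move=> a x y _ Hx _ Hy; apply: Icomb.
- move=> H m0 m w; rewrite key; apply: span_base.
  exists (tva_mode A v (-1) m (tva_vac A)), w, m0, m; split => //; split.
  + exact: H.
  + by apply: span_base; exists v, (-1), m.
- move=> [Iv V0v]; split => //.
  by move=> m0 m w; apply: Iid; left.
- move=> [Kv V0v]; split => //.
  have [s [_ _ ->]] := decomp V0v.
  elim: s => [|k s IH]; first by rewrite big_nil.
  rewrite big_cons -[X in I (X + _)]scale1r; apply: Icomb => //; exact: Kv.
Qed.
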